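(* Let $\{GM_n\}$ be the Gaussian Tetranacci numbers. Then for every $n\ge1$: (a) $\sum_{k=1}^nGM_k=\frac13\left(GM_{n+2}+2GM_n+GM_{n-1}-(1+i)\right)$; (b) $\sum_{k=1}^nGM_{2k+1}=\frac13\left(2GM_{2n+2}+GM_{2n}-GM_{2n-1}-2-2i\right)$; (c) $\sum_{k=1}^nGM_{2k}=\frac13\left(2GM_{2n+1}+GM_{2n-1}-GM_{2n-2}-2+i\right)$.
   Context: The Gaussian Tetranacci numbers are defined by $GM_0=0$, $GM_1=1$, $GM_2=1+i$, $GM_3=2+i$ and $GM_n=GM_{n-1}+GM_{n-2}+GM_{n-3}+GM_{n-4}$ for $n\ge4$. *)

(* Defs.v *)
From HB Require Import structures.
From mathcomp Require Import all_boot all_order all_algebra algC.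
Set Implicit Arguments. Unset Strict Implicit. Unset Printing Implicit Defensive.
Import Order.TTheory GRing.Theory Num.Theory.
Local Open Scope ring_scope.

Fixpoint GM (n : nat) : algC :=
  match n with
  | 0 => 0
  | 1 => 1
  | 2 => 1 + 'i
  | 3 => 2 + 'i
  | (((m.+1 as m1).+1 as m2).+1 as m3).+1 => GM m3 + GM m2 + GM m1 + GM m
  end.

(* Main.v *)
Require Import Defs.
From HB Require Import structures.
From mathcomp Require Import all_boot all_order all_algebra algC ring.
Import Order.TTheory GRing.Theory Num.Theory.
Local Open Scope ring_scope.

Lemma GMS m : GM m.+4 = GM m.+3 + GM m.+2 + GM m.+1 + GM m.
Proof. by []. Qed.

Lemma partA m : 3 * \sum_(1 <= k < m.+2) GM k
   = GM m.+3 + 2 * GM m.+1 + GM m - (1 + 'i).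
Proof.
elim: m => [|m IH].
  rewrite big_nat1 /=. ring.
rewrite big_nat_recr // mulrDr IH (GMS m). ring.
Qed.

Lemma partB m : 3 * \sum_(1 <= k < m.+2) GM (2 * k).+1
   = 2 * GM (2 * m).+4 + GM (2 * m).+2 - GM (2 * m).+1 - 2 - 2 * 'i.
Proof.
elim: m => [|m IH].
  rewrite big_nat1 /=. ring.
rewrite big_nat_recr // mulrDr IH !mulnS !add2n.
rewrite (GMS (2 * m).+2) (GMS (2 * m).+1) (GMS (2 * m)). ring.
Qed.

Lemma partC m : 3 * \sum_(1 <= k < m.+2) GM (2 * k)
   = 2 * GM (2 * m).+3 + GM (2 * m).+1 - GM (2 * m) - 2 + 'i.
Proof.
elim: m => [|m IH].
  rewrite big_nat1 /=. ring.
rewrite big_nat_recr // mulrDr IH !mulnS !add2n.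
rewrite (GMS (2 * m).+1) (GMS (2 * m)). ring.
Qed.

Lemma inv3 (x y : algC) : 3 * x = y -> x = 3^-1 * y.
Proof. move=> <-; rewrite mulrA mulVf ?mul1r //. by rewrite pnatr_eq0. Qed.

Theorem mainTheorem13 (n : nat) (hn : (1 <= n)%N) :
  [/\ \sum_(1 <= k < n.+1) GM k
        = 3^-1 * (GM n.+2 + 2 * GM n + GM n.-1 - (1 + 'i)),
      \sum_(1 <= k < n.+1) GM (2 * k).+1
        = 3^-1 * (2 * GM (2 * n).+2 + GM (2 * n) - GM (2 * n).-1 - 2 - 2 * 'i)
    & \sum_(1 <= k < n.+1) GM (2 * k)
        = 3^-1 * (2 * GM (2 * n).+1 + GM (2 * n).-1 - GM (2 * n).-2 - 2 + 'i)].
Proof.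
case: n hn => [//|m] _.
split; apply: inv3.
- by rewrite partA.
- by rewrite partB mulnS add2n.
- by rewrite partC mulnS add2n.
Qed.
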